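(* Let $k_0\in\mathbb{R}\setminus\{0\}$ and let $z\in C^2([-1,1])$ be a complex-valued function with $z(x)\neq0$ for all $x\in[-1,1]$ satisfying $$z(\pm1)=1,\qquad z'(\pm1)=\pm ik_0,\qquad \int_{-1}^{1}z^2(x)\,dx=\frac{1}{ik_0}.$$ Define $U(x)=\dfrac{z''(x)+k_0^2z(x)}{z(x)}$ for $|x|<1$ and $U(x)=0$ for $|x|\ge1$, and let $\psi(x)=z(x)$ for $|x|\le 1$, $\psi(x)=e^{ik_0(|x|-1)}$ for $|x|\ge1$. Then $\psi$ is a nontrivial solution of $-\psi''+U\psi=k_0^2\psi$ on $|x|<1$ with $\psi=\alpha_\pm e^{ik_0|x|}$ for $\pm x\ge1$ (here $\alpha_\pm=e^{-ik_0}$), and there exist constants $\beta_\pm\in\mathbb{C}$ and $\phi\in C^1(\mathbb{R})$ with $$-\phi''+U(x)\phi-k_0^2\phi=2k_0\psi\quad(|x|<1),\qquad \phi(x)=\big(i\alpha_\pm|x|+\beta_\pm\big)e^{ik_0|x|}\quad(\pm x\ge1).$$ That is, $U$ has a spectral singularity of the second order at $k=k_0$.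
   Context: A spectral singularity at real $k_0\neq0$ of $-\frac{d^2}{dx^2}+U(x)$ (with $U$ vanishing outside $[-1,1]$) means that $-\psi''+U\psi=k_0^2\psi$, $\psi=\alpha_\pm e^{ik_0|x|}$ for $\pm x\ge1$, has a nontrivial $C^1$ solution; it is of the second order when, in addition, the inhomogeneous problem for $\phi$ stated in the claim has a $C^1(\mathbb{R})$ solution. *)

(* Defs.v *)
From Stdlib Require Import Reals.
From Coquelicot Require Import Coquelicot.

Open Scope R_scope.

Definition eix (t : R) : C := (cos t, sin t).

(* f' is the derivative of f at x relative to the set D (one-sided at
   boundary points of an interval; the ordinary derivative when x is an
   interior point of D). *)
Definition has_deriv_within (D : R -> Prop) (f f' : R -> C) (x : R) : Prop :=
  forall eps : R, 0 < eps -> exists delta : R, 0 < delta /\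
    forall y : R, D y -> Rabs (y - x) < delta ->
      Cmod (Cminus (Cminus (f y) (f x)) (Cmult (RtoC (y - x)) (f' x)))
        <= eps * Rabs (y - x).

Definition cont_within (D : R -> Prop) (f : R -> C) : Prop :=
  forall x : R, D x -> forall eps : R, 0 < eps -> exists delta : R, 0 < delta /\
    forall y : R, D y -> Rabs (y - x) < delta -> Cmod (Cminus (f y) (f x)) < eps.

Definition Icc11 (x : R) : Prop := -1 <= x <= 1.
Definition everywhere (x : R) : Prop := True.

Definition C1_with (f f' : R -> C) : Prop :=
  (forall x, has_deriv_within everywhere f f' x) /\ cont_within everywhere f'.

Definition U_of (k0 : R) (z z2 : R -> C) (x : R) : C :=
  if Rlt_dec (Rabs x) 1
  then Cdiv (Cplus (z2 x) (Cmult (RtoC (k0 ^ 2)) (z x))) (z x)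
  else RtoC 0.

Definition psi_of (k0 : R) (z : R -> C) (x : R) : C :=
  if Rle_dec (Rabs x) 1 then z x else eix (k0 * (Rabs x - 1)).

(* Main.v *)
Require Import Defs.
From Stdlib Require Import Reals Lra.
From Coquelicot Require Import Coquelicot.
Open Scope R_scope.

Definition ContAt (D : R -> Prop) (f : R -> C) (x : R) : Prop :=
  forall eps : R, 0 < eps -> exists delta : R, 0 < delta /\
    forall y : R, D y -> Rabs (y - x) < delta -> Cmod (Cminus (f y) (f x)) < eps.

Lemma Cmod_RtoC (r : R) : Cmod (RtoC r) = Rabs r.
Proof. apply Cmod_R. Qed.

Lemma hd_cont D f f' x : has_deriv_within D f f' x -> ContAt D f x.
Proof.
  intros H eps Heps. destruct (H 1 Rlt_0_1) as [d [Hd Hy]].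
  set (M := Cmod (f' x) + 1).
  assert (HM : 0 < M) by (unfold M; generalize (Cmod_ge_0 (f' x)); lra).
  exists (Rmin d (eps / M)). split.
  { apply Rmin_pos; auto. apply Rdiv_lt_0_compat; auto. }
  intros y Dy Hyx.
  assert (H1 : Rabs (y - x) < d) by (eapply Rlt_le_trans; [exact Hyx| apply Rmin_l]).
  assert (H2 : Rabs (y - x) < eps / M) by (eapply Rlt_le_trans; [exact Hyx| apply Rmin_r]).
  specialize (Hy y Dy H1).
  replace (Cminus (f y) (f x)) with
    (Cplus (Cminus (Cminus (f y) (f x)) (Cmult (RtoC (y - x)) (f' x)))
           (Cmult (RtoC (y - x)) (f' x))) by ring.
  eapply Rle_lt_trans. apply Cmod_triangle.
  rewrite Cmod_mult, Cmod_RtoC.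
  assert (HK : Rabs (y - x) * M < eps).
  { apply Rmult_lt_reg_r with (/ M). apply Rinv_0_lt_compat; auto.
    rewrite Rmult_assoc, Rinv_r by lra. rewrite Rmult_1_r. exact H2. }
  unfold M in HK. rewrite Rmult_plus_distr_l, Rmult_1_r in HK. lra.
Qed.

Lemma hd_plus D f f' g g' x :
  has_deriv_within D f f' x -> has_deriv_within D g g' x ->
  has_deriv_within D (fun y => Cplus (f y) (g y)) (fun y => Cplus (f' y) (g' y)) x.
Proof.
  intros Hf Hg eps Heps.
  destruct (Hf (eps/2)) as [d1 [Hd1 H1]]; [lra|].
  destruct (Hg (eps/2)) as [d2 [Hd2 H2]]; [lra|].
  exists (Rmin d1 d2). split; [apply Rmin_pos; auto|].
  intros y Dy Hy.
  assert (Hy1 : Rabs (y - x) < d1) by (eapply Rlt_le_trans; [exact Hy| apply Rmin_l]).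
  assert (Hy2 : Rabs (y - x) < d2) by (eapply Rlt_le_trans; [exact Hy| apply Rmin_r]).
  specialize (H1 y Dy Hy1). specialize (H2 y Dy Hy2).
  replace (Cminus (Cminus (Cplus (f y) (g y)) (Cplus (f x) (g x)))
             (Cmult (RtoC (y - x)) (Cplus (f' x) (g' x)))) with
    (Cplus (Cminus (Cminus (f y) (f x)) (Cmult (RtoC (y - x)) (f' x)))
           (Cminus (Cminus (g y) (g x)) (Cmult (RtoC (y - x)) (g' x)))) by ring.
  eapply Rle_trans. apply Cmod_triangle. lra.
Qed.

Lemma hd_const D (c : C) x : has_deriv_within D (fun _ => c) (fun _ => RtoC 0) x.
Proof.
  intros eps Heps. exists 1. split; [lra|]. intros y _ _.
  replace (Cminus (Cminus c c) (Cmult (RtoC (y - x)) (RtoC 0))) with (RtoC 0) by ring.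
  rewrite Cmod_0. apply Rmult_le_pos; [lra| apply Rabs_pos].
Qed.

Lemma hd_id D x : has_deriv_within D (fun y => RtoC y) (fun _ => RtoC 1) x.
Proof.
  intros eps Heps. exists 1. split; [lra|]. intros y _ _.
  replace (Cminus (Cminus (RtoC y) (RtoC x)) (Cmult (RtoC (y - x)) (RtoC 1))) with (RtoC 0).
  rewrite Cmod_0. apply Rmult_le_pos; [lra| apply Rabs_pos].
  unfold Cminus, Cplus, Cmult, Copp, RtoC; simpl. f_equal; ring.
Qed.

Lemma hd_mult D f f' g g' x :
  has_deriv_within D f f' x -> has_deriv_within D g g' x ->
  has_deriv_within D (fun y => Cmult (f y) (g y))
    (fun y => Cplus (Cmult (f' y) (g y)) (Cmult (f y) (g' y))) x.
Proof.
  intros Hf Hg eps Heps.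
  set (K := Cmod (g x) + Cmod (f x) + Cmod (f' x) + 1).
  assert (HK : 0 < K) by (unfold K; generalize (Cmod_ge_0 (g x)) (Cmod_ge_0 (f x)) (Cmod_ge_0 (f' x)); lra).
  set (e := eps / K).
  assert (He : 0 < e) by (apply Rdiv_lt_0_compat; auto).
  assert (HeK : eps = e * K) by (unfold e; field; lra).
  destruct (Hf e He) as [d1 [Hd1 H1]].
  destruct (Hg e He) as [d2 [Hd2 H2]].
  destruct (hd_cont D g g' x Hg (Rmin 1 e)) as [d3 [Hd3 H3]]; [apply Rmin_pos; lra|].
  exists (Rmin d1 (Rmin d2 d3)). split; [repeat apply Rmin_pos; auto|].
  intros y Dy Hy.
  assert (Hy1 : Rabs (y - x) < d1) by (eapply Rlt_le_trans; [exact Hy| apply Rmin_l]).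
  assert (Hy2 : Rabs (y - x) < d2) by (eapply Rlt_le_trans; [exact Hy| eapply Rle_trans; [apply Rmin_r| apply Rmin_l]]).
  assert (Hy3 : Rabs (y - x) < d3) by (eapply Rlt_le_trans; [exact Hy| eapply Rle_trans; [apply Rmin_r| apply Rmin_r]]).
  specialize (H1 y Dy Hy1). specialize (H2 y Dy Hy2). specialize (H3 y Dy Hy3).
  set (ef := Cminus (Cminus (f y) (f x)) (Cmult (RtoC (y - x)) (f' x))) in *.
  set (eg := Cminus (Cminus (g y) (g x)) (Cmult (RtoC (y - x)) (g' x))) in *.
  replace (Cminus (Cminus (Cmult (f y) (g y)) (Cmult (f x) (g x)))
             (Cmult (RtoC (y - x)) (Cplus (Cmult (f' x) (g x)) (Cmult (f x) (g' x))))) with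
    (Cplus (Cplus (Cmult ef (g y)) (Cmult (f x) eg))
       (Cmult (Cmult (RtoC (y - x)) (f' x)) (Cminus (g y) (g x)))) by (unfold ef, eg; ring).
  assert (Hgy : Cmod (g y) <= Cmod (g x) + 1).
  { replace (g y) with (Cplus (g x) (Cminus (g y) (g x))) by ring.
    eapply Rle_trans. apply Cmod_triangle.
    assert (Rmin 1 e <= 1) by apply Rmin_l. lra. }
  assert (Hd : Cmod (Cminus (g y) (g x)) <= e) by (assert (Rmin 1 e <= e) by apply Rmin_r; lra).
  eapply Rle_trans. apply Cmod_triangle.
  eapply Rle_trans. apply Rplus_le_compat_r. apply Cmod_triangle.
  rewrite !Cmod_mult, Cmod_RtoC.
  set (h := Rabs (y - x)) in *.
  assert (P1 : Cmod ef * Cmod (g y) <= (e * h) * (Cmod (g x) + 1)).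
  { apply Rmult_le_compat; auto using Cmod_ge_0. }
  assert (P2 : Cmod (f x) * Cmod eg <= Cmod (f x) * (e * h)).
  { apply Rmult_le_compat_l; auto using Cmod_ge_0. }
  assert (P3 : h * Cmod (f' x) * Cmod (Cminus (g y) (g x)) <= h * Cmod (f' x) * e).
  { apply Rmult_le_compat_l; auto. apply Rmult_le_pos; [apply Rabs_pos| apply Cmod_ge_0]. }
  rewrite HeK. unfold K. lra.
Qed.

Lemma div_le_aux U V T : 0 < V -> U <= T * V -> U * / V <= T.
Proof.
  intros HV H. apply Rmult_le_reg_r with V; auto.
  rewrite Rmult_assoc, Rinv_l by lra. lra.
Qed.

Lemma hd_inv D f f' x : f x <> RtoC 0 ->
  has_deriv_within D f f' x ->
  has_deriv_within D (fun y => Cinv (f y))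
    (fun y => Copp (Cmult (f' y) (Cinv (Cmult (f y) (f y))))) x.
Proof.
  intros Hnz Hf eps Heps.
  set (A := Cmod (f x)).
  assert (HA : 0 < A) by (apply Cmod_gt_0; auto).
  set (P := Cmod (f' x) + 1).
  assert (HP : 0 < P) by (unfold P; generalize (Cmod_ge_0 (f' x)); lra).
  set (e := eps * (A * A) / 4).
  set (e3 := eps * (A * A * A) / (4 * P)).
  assert (He : 0 < e) by (unfold e; apply Rdiv_lt_0_compat; [apply Rmult_lt_0_compat; nra| lra]).
  assert (He3 : 0 < e3) by (unfold e3; apply Rdiv_lt_0_compat; [apply Rmult_lt_0_compat; [lra| repeat apply Rmult_lt_0_compat; lra]| lra]).
  destruct (Hf e He) as [d1 [Hd1 H1]].
  destruct (hd_cont D f f' x Hf (Rmin (A/2) e3)) as [d3 [Hd3 H3]]; [apply Rmin_pos; lra|].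
  exists (Rmin d1 d3). split; [apply Rmin_pos; auto|].
  intros y Dy Hy.
  assert (Hy1 : Rabs (y - x) < d1) by (eapply Rlt_le_trans; [exact Hy| apply Rmin_l]).
  assert (Hy3 : Rabs (y - x) < d3) by (eapply Rlt_le_trans; [exact Hy| apply Rmin_r]).
  specialize (H1 y Dy Hy1). specialize (H3 y Dy Hy3).
  assert (Hba : Cmod (Cminus (f y) (f x)) < A / 2) by (assert (Rmin (A/2) e3 <= A/2) by apply Rmin_l; lra).
  assert (Hba3 : Cmod (Cminus (f y) (f x)) <= e3) by (assert (Rmin (A/2) e3 <= e3) by apply Rmin_r; lra).
  assert (HB : A / 2 <= Cmod (f y)).
  { assert (A <= Cmod (f y) + Cmod (Cminus (f x) (f y))).
    { unfold A. replace (f x) with (Cplus (f y) (Cminus (f x) (f y))) at 1 by ring. apply Cmod_triangle. }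
    replace (Cminus (f x) (f y)) with (Copp (Cminus (f y) (f x))) in H by ring.
    rewrite Cmod_opp in H. lra. }
  assert (Hfy : f y <> RtoC 0).
  { intro E. rewrite E, Cmod_0 in HB. lra. }
  set (a := f x) in *. set (b := f y) in *.
  set (err := Cminus (Cminus b a) (Cmult (RtoC (y - x)) (f' x))) in *.
  replace (Cminus (Cminus (Cinv b) (Cinv a)) (Cmult (RtoC (y - x)) (Copp (Cmult (f' x) (Cinv (Cmult a a))))))
    with (Cplus (Cmult (Copp err) (Cinv (Cmult a b)))
                (Cmult (Cmult (Cmult (RtoC (y - x)) (f' x)) (Cminus b a)) (Cinv (Cmult (Cmult a a) b))))
    by (unfold err; field; auto).
  eapply Rle_trans. apply Cmod_triangle.
  assert (HAn : a <> RtoC 0) by exact Hnz.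
  rewrite !Cmod_mult, !Cmod_inv by (repeat apply Cmult_neq_0; auto).
  rewrite !Cmod_mult, Cmod_opp, Cmod_RtoC.
  fold A. set (B := Cmod b) in *. set (h := Rabs (y - x)) in *.
  assert (Hh : 0 <= h) by apply Rabs_pos.
  set (E := Cmod err) in *. set (Q := Cmod (f' x)) in *. set (Dd := Cmod (Cminus b a)) in *.
  assert (HQ : 0 <= Q) by apply Cmod_ge_0.
  assert (HD0 : 0 <= Dd) by apply Cmod_ge_0.
  assert (T1 : E * / (A * B) <= eps * h / 2).
  { apply div_le_aux; [nra|].
    assert (E <= e * h) by lra.
    assert (e * h = eps * h * A * A / 4) by (unfold e; field).
    assert (0 <= eps * h * A / 2 * (B - A / 2)) by (apply Rmult_le_pos; [apply Rmult_le_pos; [nra|lra]|lra]).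
    nra. }
  assert (T2 : h * Q * Dd * / (A * A * B) <= eps * h / 2).
  { apply div_le_aux; [apply Rmult_lt_0_compat; nra|].
    assert (e3 * P = eps * A * A * A / 4) by (unfold e3; field; lra).
    assert (h * Q * Dd <= h * Q * e3) by (apply Rmult_le_compat_l; nra).
    assert (h * Q * e3 <= h * P * e3) by (apply Rmult_le_compat_r; [lra| apply Rmult_le_compat_l; [lra| unfold P, Q; lra]]).
    assert (0 <= eps * h * A * A / 2 * (B - A / 2)) by (unfold Rdiv; repeat apply Rmult_le_pos; try lra; left; apply Rinv_0_lt_compat; lra).
    assert (h * P * e3 = eps * h * A * A * A / 4) as HH. { replace (h * P * e3) with (h * (e3 * P)) by ring. match goal with HE : e3 * P = _ |- _ => rewrite HE end. field. } lra. }
  lra.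
Qed.

Lemma hd_val D f f' g' x : g' x = f' x -> has_deriv_within D f f' x -> has_deriv_within D f g' x.
Proof. intros E H eps Heps. rewrite E. apply H; auto. Qed.

Lemma hd_ext D f g f' g' x : D x -> (forall y, D y -> f y = g y) -> g' x = f' x ->
  has_deriv_within D f f' x -> has_deriv_within D g g' x.
Proof.
  intros Dx E E' H eps Heps. destruct (H eps Heps) as [d [Hd H1]]. exists d; split; auto.
  intros y Dy Hy. rewrite <- !E, E'; auto.
Qed.

Lemma hd_sub (D1 D2 : R -> Prop) f f' x : (forall y, D2 y -> D1 y) ->
  has_deriv_within D1 f f' x -> has_deriv_within D2 f f' x.
Proof.
  intros S H eps Heps. destruct (H eps Heps) as [d [Hd H1]]. exists d; split; auto.
Qed.

Lemma hd_cover (A B : R -> Prop) f f' x :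
  (exists r, 0 < r /\ forall y, Rabs (y - x) < r -> A y \/ B y) ->
  has_deriv_within A f f' x -> has_deriv_within B f f' x ->
  has_deriv_within everywhere f f' x.
Proof.
  intros [r [Hr Hc]] HA HB eps Heps.
  destruct (HA eps Heps) as [d1 [Hd1 H1]]. destruct (HB eps Heps) as [d2 [Hd2 H2]].
  exists (Rmin r (Rmin d1 d2)). split; [repeat apply Rmin_pos; auto|].
  intros y _ Hy.
  assert (Hy0 : Rabs (y - x) < r) by (eapply Rlt_le_trans; [exact Hy| apply Rmin_l]).
  assert (Hy1 : Rabs (y - x) < d1) by (eapply Rlt_le_trans; [exact Hy| eapply Rle_trans; [apply Rmin_r| apply Rmin_l]]).
  assert (Hy2 : Rabs (y - x) < d2) by (eapply Rlt_le_trans; [exact Hy| eapply Rle_trans; [apply Rmin_r| apply Rmin_r]]).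
  destruct (Hc y Hy0); auto.
Qed.

Lemma cont_ext D f g x : D x -> (forall y, D y -> f y = g y) -> ContAt D f x -> ContAt D g x.
Proof.
  intros Dx E H eps Heps. destruct (H eps Heps) as [d [Hd H1]]. exists d; split; auto.
  intros y Dy Hy. rewrite <- !E; auto.
Qed.

Lemma cont_cover (A B : R -> Prop) f x :
  (exists r, 0 < r /\ forall y, Rabs (y - x) < r -> A y \/ B y) ->
  ContAt A f x -> ContAt B f x -> ContAt everywhere f x.
Proof.
  intros [r [Hr Hc]] HA HB eps Heps.
  destruct (HA eps Heps) as [d1 [Hd1 H1]]. destruct (HB eps Heps) as [d2 [Hd2 H2]].
  exists (Rmin r (Rmin d1 d2)). split; [repeat apply Rmin_pos; auto|].
  intros y _ Hy.
  assert (Hy0 : Rabs (y - x) < r) by (eapply Rlt_le_trans; [exact Hy| apply Rmin_l]).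
  assert (Hy1 : Rabs (y - x) < d1) by (eapply Rlt_le_trans; [exact Hy| eapply Rle_trans; [apply Rmin_r| apply Rmin_l]]).
  assert (Hy2 : Rabs (y - x) < d2) by (eapply Rlt_le_trans; [exact Hy| eapply Rle_trans; [apply Rmin_r| apply Rmin_r]]).
  destruct (Hc y Hy0); auto.
Qed.

Definition Gt1 (y : R) : Prop := 1 <= y.
Definition Ltm1 (y : R) : Prop := y <= -1.

Lemma cover_cases (x : R) :
  (x < -1 /\ exists r, 0 < r /\ forall y, Rabs (y - x) < r -> Ltm1 y \/ Ltm1 y) \/
  (x = -1 /\ exists r, 0 < r /\ forall y, Rabs (y - x) < r -> Ltm1 y \/ Icc11 y) \/
  (-1 < x < 1 /\ exists r, 0 < r /\ forall y, Rabs (y - x) < r -> Icc11 y \/ Icc11 y) \/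
  (x = 1 /\ exists r, 0 < r /\ forall y, Rabs (y - x) < r -> Icc11 y \/ Gt1 y) \/
  (1 < x /\ exists r, 0 < r /\ forall y, Rabs (y - x) < r -> Gt1 y \/ Gt1 y).
Proof.
  unfold Ltm1, Gt1, Icc11.
  destruct (Rtotal_order x (-1)) as [H|[H|H]].
  - left. split; auto. exists (-1 - x). split; [lra|]. intros y Hy.
    apply Rabs_def2 in Hy. lra.
  - right; left. split; auto. exists 1. split; [lra|]. intros y Hy.
    apply Rabs_def2 in Hy. lra.
  - destruct (Rtotal_order x 1) as [H'|[H'|H']].
    + right; right; left. split; [lra|]. exists (Rmin (1 - x) (x + 1)). split; [apply Rmin_pos; lra|].
      intros y Hy. apply Rabs_def2 in Hy. generalize (Rmin_l (1-x) (x+1)) (Rmin_r (1-x) (x+1)). lra.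
    + right; right; right; left. split; auto. exists 1. split; [lra|]. intros y Hy.
      apply Rabs_def2 in Hy. lra.
    + right; right; right; right. split; auto. exists (x - 1). split; [lra|]. intros y Hy.
      apply Rabs_def2 in Hy. lra.
Qed.

Lemma glue_hd f f' :
  (forall x, Icc11 x -> has_deriv_within Icc11 f f' x) ->
  (forall x, Gt1 x -> has_deriv_within Gt1 f f' x) ->
  (forall x, Ltm1 x -> has_deriv_within Ltm1 f f' x) ->
  forall x, has_deriv_within everywhere f f' x.
Proof.
  intros HM HR HL x.
  unfold Gt1, Ltm1, Icc11 in *.
  destruct (cover_cases x) as [[H C]|[[H C]|[[H C]|[[H C]|[H C]]]]];
    eapply hd_cover; try exact C; (apply HM || apply HR || apply HL); unfold Icc11, Gt1, Ltm1; lra.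
Qed.

Lemma glue_cont f :
  (forall x, Icc11 x -> ContAt Icc11 f x) ->
  (forall x, Gt1 x -> ContAt Gt1 f x) ->
  (forall x, Ltm1 x -> ContAt Ltm1 f x) ->
  forall x, ContAt everywhere f x.
Proof.
  intros HM HR HL x.
  destruct (cover_cases x) as [[H C]|[[H C]|[[H C]|[[H C]|[H C]]]]];
    eapply cont_cover; try exact C; (apply HM || apply HR || apply HL); unfold Icc11, Gt1, Ltm1; lra.
Qed.

Lemma Cmod_le_sum (c : C) : Cmod c <= Rabs (fst c) + Rabs (snd c).
Proof.
  destruct c as [a b]. simpl.
  replace (a, b) with (Cplus (RtoC a) (Cmult Ci (RtoC b))).
  2:{ unfold Cplus, Cmult, Ci, RtoC; simpl. f_equal; ring. }
  eapply Rle_trans. apply Cmod_triangle.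
  rewrite Cmod_mult, !Cmod_RtoC. 
  assert (Cmod Ci = 1).
  { unfold Cmod, Ci; simpl. replace (0 * (0 * 1) + 1 * (1 * 1)) with 1 by ring. apply sqrt_1. }
  rewrite H. lra.
Qed.

Lemma hd_of_real D f f' x :
  derivable_pt_lim (fun y => fst (f y)) x (fst (f' x)) ->
  derivable_pt_lim (fun y => snd (f y)) x (snd (f' x)) ->
  has_deriv_within D f f' x.
Proof.
  intros H1 H2 eps Heps.
  destruct (H1 (eps/2)) as [d1 Hd1]; [lra|].
  destruct (H2 (eps/2)) as [d2 Hd2]; [lra|].
  exists (Rmin d1 d2). split; [apply Rmin_pos; apply cond_pos|].
  intros y _ Hy.
  destruct (Req_dec y x) as [E|NE].
  { subst y. replace (Cminus (Cminus (f x) (f x)) (Cmult (RtoC (x - x)) (f' x))) with (RtoC 0).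
    rewrite Cmod_0. apply Rmult_le_pos; [lra|apply Rabs_pos].
    replace (x - x) with 0 by ring. ring. }
  assert (Hh : y - x <> 0) by lra.
  assert (Hy1 : Rabs (y - x) < d1) by (eapply Rlt_le_trans; [exact Hy| apply Rmin_l]).
  assert (Hy2 : Rabs (y - x) < d2) by (eapply Rlt_le_trans; [exact Hy| apply Rmin_r]).
  specialize (Hd1 (y - x) Hh Hy1). specialize (Hd2 (y - x) Hh Hy2).
  replace (x + (y - x)) with y in Hd1, Hd2 by ring.
  eapply Rle_trans. apply Cmod_le_sum.
  destruct (f y) as [a b]. destruct (f x) as [c d]. destruct (f' x) as [p q]. simpl in *.
  assert (HA : Rabs (a - c - ((y - x) * p - 0 * q)) <= eps / 2 * Rabs (y - x)).
  { replace (a - c - ((y - x) * p - 0 * q)) with ((y - x) * ((a - c) / (y - x) - p)) by (field; auto).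
    rewrite Rabs_mult. rewrite Rmult_comm. apply Rmult_le_compat_r; [apply Rabs_pos| lra]. }
  assert (HB : Rabs (b - d - ((y - x) * q + 0 * p)) <= eps / 2 * Rabs (y - x)).
  { replace (b - d - ((y - x) * q + 0 * p)) with ((y - x) * ((b - d) / (y - x) - q)) by (field; auto).
    rewrite Rabs_mult. rewrite Rmult_comm. apply Rmult_le_compat_r; [apply Rabs_pos| lra]. }
  unfold Rminus in *. lra.
Qed.

Lemma hd_eix D a b x :
  has_deriv_within D (fun y => eix (a * y + b))
    (fun y => Cmult (Cmult Ci (RtoC a)) (eix (a * y + b))) x.
Proof.
  apply hd_of_real; unfold eix; simpl.
  - apply is_derive_Reals.
    assert (H : is_derive (fun y => cos (a * y + b)) x (- (a * sin (a * x + b)))).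
    { auto_derive; auto. ring. }
    match goal with |- is_derive _ _ ?v => replace v with (- (a * sin (a * x + b))) by ring end.
    exact H.
  - apply is_derive_Reals.
    assert (H : is_derive (fun y => sin (a * y + b)) x (a * cos (a * x + b))).
    { auto_derive; auto. ring. }
    match goal with |- is_derive _ _ ?v => replace v with (a * cos (a * x + b)) by ring end.
    exact H.
Qed.

Lemma cont_fst f x : ContAt everywhere f x -> continuous (fun y => fst (f y)) x.
Proof.
  intros H. apply continuity_pt_filterlim.
  unfold continuity_pt, continue_in, limit1_in, limit_in.
  intros eps Heps. destruct (H eps Heps) as [d [Hd H1]]. exists d. split; auto.
  intros y [_ Hy]. simpl in *. unfold R_dist in *.
  eapply Rle_lt_trans; [| apply (H1 y I Hy)].
  apply (re_le_Cmod (Cminus (f y) (f x))).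
Qed.

Lemma cont_snd f x : ContAt everywhere f x -> continuous (fun y => snd (f y)) x.
Proof.
  intros H. apply continuity_pt_filterlim.
  unfold continuity_pt, continue_in, limit1_in, limit_in.
  intros eps Heps. destruct (H eps Heps) as [d [Hd H1]]. exists d. split; auto.
  intros y [_ Hy]. simpl in *. unfold R_dist in *.
  eapply Rle_lt_trans; [| apply (H1 y I Hy)].
  apply Rle_trans with (Rmax (Rabs (fst (Cminus (f y) (f x)))) (Rabs (snd (Cminus (f y) (f x))))); [apply Rmax_r| apply Rmax_Cmod].
Qed.

Definition cl (y : R) : R := Rmax (-1) (Rmin 1 y).

Lemma cl_Icc y : Icc11 (cl y).
Proof. unfold cl, Icc11, Rmax, Rmin. repeat destruct Rle_dec; lra. Qed.

Lemma cl_id y : Icc11 y -> cl y = y.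
Proof. unfold cl, Icc11, Rmax, Rmin. intros. repeat destruct Rle_dec; lra. Qed.

Lemma cl_lip x y : Rabs (cl y - cl x) <= Rabs (y - x).
Proof.
  unfold cl, Rmax, Rmin. repeat destruct Rle_dec;
  unfold Rabs; repeat destruct Rcase_abs; lra.
Qed.

Lemma cont_clamp f : (forall x, Icc11 x -> ContAt Icc11 f x) ->
  forall x, ContAt everywhere (fun y => f (cl y)) x.
Proof.
  intros H x eps Heps. destruct (H (cl x) (cl_Icc x) eps Heps) as [d [Hd H1]].
  exists d. split; auto. intros y _ Hy. apply H1. apply cl_Icc.
  eapply Rle_lt_trans. apply cl_lip. auto.
Qed.

Definition prim (g : R -> C) (y : R) : C :=
  (RInt (fun t => fst (g t)) (-1) y, RInt (fun t => snd (g t)) (-1) y).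

Lemma hd_prim g D x : (forall x, ContAt everywhere g x) ->
  has_deriv_within D (prim g) g x.
Proof.
  intros Hc. apply hd_of_real; unfold prim; simpl; apply is_derive_Reals.
  - apply (is_derive_RInt (fun t => fst (g t)) _ (-1)).
    + apply filter_forall. intros. apply (RInt_correct (V := R_CompleteNormedModule)).
      apply ex_RInt_continuous. intros. apply cont_fst; auto.
    + apply cont_fst; auto.
  - apply (is_derive_RInt (fun t => snd (g t)) _ (-1)).
    + apply filter_forall. intros. apply (RInt_correct (V := R_CompleteNormedModule)).
      apply ex_RInt_continuous. intros. apply cont_snd; auto.
    + apply cont_snd; auto.
Qed.

Lemma prim_m1 g : prim g (-1) = RtoC 0.
Proof. unfold prim. rewrite !RInt_point. reflexivity. Qed.

Lemma hd_minus D f f' g g' x :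
  has_deriv_within D f f' x -> has_deriv_within D g g' x ->
  has_deriv_within D (fun y => Cminus (f y) (g y)) (fun y => Cminus (f' y) (g' y)) x.
Proof.
  intros Hf Hg eps Heps.
  destruct (Hf (eps/2)) as [d1 [Hd1 H1]]; [lra|].
  destruct (Hg (eps/2)) as [d2 [Hd2 H2]]; [lra|].
  exists (Rmin d1 d2). split; [apply Rmin_pos; auto|].
  intros y Dy Hy.
  assert (Hy1 : Rabs (y - x) < d1) by (eapply Rlt_le_trans; [exact Hy| apply Rmin_l]).
  assert (Hy2 : Rabs (y - x) < d2) by (eapply Rlt_le_trans; [exact Hy| apply Rmin_r]).
  specialize (H1 y Dy Hy1). specialize (H2 y Dy Hy2).
  replace (Cminus (Cminus (Cminus (f y) (g y)) (Cminus (f x) (g x)))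
             (Cmult (RtoC (y - x)) (Cminus (f' x) (g' x)))) with
    (Cplus (Cminus (Cminus (f y) (f x)) (Cmult (RtoC (y - x)) (f' x)))
           (Copp (Cminus (Cminus (g y) (g x)) (Cmult (RtoC (y - x)) (g' x))))) by ring.
  eapply Rle_trans. apply Cmod_triangle. rewrite Cmod_opp. lra.
Qed.

Lemma hd_lin D a b x : has_deriv_within D (fun y => RtoC (a * y + b)) (fun _ => RtoC a) x.
Proof.
  apply hd_of_real; simpl; apply is_derive_Reals.
  - auto_derive; auto. ring.
  - auto_derive; auto.
Qed.

Lemma eix_add a b : eix (a + b) = Cmult (eix a) (eix b).
Proof. unfold eix, Cmult; simpl. rewrite cos_plus, sin_plus. f_equal; ring. Qed.

Lemma eix_0 : eix 0 = RtoC 1.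
Proof. unfold eix. rewrite cos_0, sin_0. reflexivity. Qed.

Lemma prim_1 (z : R -> C) (I : C) :
  is_RInt (fun x => Cmult (z x) (z x)) (-1) 1 I ->
  prim (fun y => Cmult (z (cl y)) (z (cl y))) 1 = I.
Proof.
  intros H. unfold prim.
  assert (E : forall t, Rmin (-1) 1 < t < Rmax (-1) 1 -> z t = z (cl t)).
  { intros t Ht. rewrite Rmin_left, Rmax_right in Ht by lra. rewrite cl_id; auto. unfold Icc11; lra. }
  destruct I as [p q].
  f_equal.
  - apply (is_RInt_unique (V := R_CompleteNormedModule)).
    apply is_RInt_fct_extend_fst in H. simpl in H.
    eapply is_RInt_ext; [| exact H]. intros t Ht. simpl. rewrite <- E; auto.
  - apply (is_RInt_unique (V := R_CompleteNormedModule)).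
    apply is_RInt_fct_extend_snd in H. simpl in H.
    eapply is_RInt_ext; [| exact H]. intros t Ht. simpl. rewrite <- E; auto.
Qed.

Definition Ep (k0 y : R) : C := eix (k0 * y + - k0).
Definition Em (k0 y : R) : C := eix (- k0 * y + - k0).

Definition psi1_def (k0 : R) (z1 : R -> C) (y : R) : C :=
  if Rle_dec (Rabs y) 1 then z1 y
  else if Rle_dec y 0 then Cmult (Cmult Ci (RtoC (- k0))) (Em k0 y)
  else Cmult (Cmult Ci (RtoC k0)) (Ep k0 y).

Ltac Ceq := apply injective_projections; simpl; ring.

Lemma abs_Gt y : 1 <= y -> Rabs y = y.
Proof. intros; apply Rabs_right; lra. Qed.
Lemma abs_Lt y : y <= -1 -> Rabs y = - y.
Proof. intros; apply Rabs_left; lra. Qed.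

Lemma psi_Gt k0 z y : z 1 = RtoC 1 -> 1 <= y -> psi_of k0 z y = Ep k0 y.
Proof.
  intros H1 Hy. unfold psi_of, Ep. rewrite abs_Gt by auto.
  destruct (Rle_dec y 1).
  - replace y with 1 by lra. rewrite H1. replace (k0 * 1 + - k0) with 0 by ring. now rewrite eix_0.
  - f_equal. ring.
Qed.

Lemma psi_Lt k0 z y : z (-1) = RtoC 1 -> y <= -1 -> psi_of k0 z y = Em k0 y.
Proof.
  intros H1 Hy. unfold psi_of, Em. rewrite abs_Lt by auto.
  destruct (Rle_dec (- y) 1).
  - replace y with (-1) by lra. rewrite H1. replace (- k0 * -1 + - k0) with 0 by ring. now rewrite eix_0.
  - f_equal. ring.
Qed.

Lemma psi_M k0 z y : Icc11 y -> psi_of k0 z y = z y.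
Proof.
  intros Hy. unfold psi_of. destruct (Rle_dec (Rabs y) 1); auto.
  exfalso. apply n. unfold Icc11 in Hy. apply Rabs_le. lra.
Qed.

Lemma psi1_M k0 z1 y : Icc11 y -> psi1_def k0 z1 y = z1 y.
Proof.
  intros Hy. unfold psi1_def. destruct (Rle_dec (Rabs y) 1); auto.
  exfalso. apply n. unfold Icc11 in Hy. apply Rabs_le. lra.
Qed.

Lemma psi1_Gt k0 z1 y : z1 1 = Cmult Ci (RtoC k0) -> 1 <= y ->
  psi1_def k0 z1 y = Cmult (Cmult Ci (RtoC k0)) (Ep k0 y).
Proof.
  intros H1 Hy. unfold psi1_def. rewrite abs_Gt by auto.
  destruct (Rle_dec y 1).
  - replace y with 1 by lra. rewrite H1. unfold Ep. replace (k0 * 1 + - k0) with 0 by ring.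
    rewrite eix_0. Ceq.
  - destruct (Rle_dec y 0); [lra| auto].
Qed.

Lemma psi1_Lt k0 z1 y : z1 (-1) = Copp (Cmult Ci (RtoC k0)) -> y <= -1 ->
  psi1_def k0 z1 y = Cmult (Cmult Ci (RtoC (- k0))) (Em k0 y).
Proof.
  intros H1 Hy. unfold psi1_def. rewrite abs_Lt by auto.
  destruct (Rle_dec (- y) 1).
  - replace y with (-1) by lra. rewrite H1. unfold Em. replace (- k0 * -1 + - k0) with 0 by ring.
    rewrite eix_0. Ceq.
  - destruct (Rle_dec y 0); [auto| lra].
Qed.

Lemma interior_cover x : Rabs x < 1 ->
  exists r, 0 < r /\ forall y, Rabs (y - x) < r -> Icc11 y \/ Icc11 y.
Proof.
  intros H. apply Rabs_def2 in H. exists (Rmin (1 - x) (1 + x)). split; [apply Rmin_pos; lra|].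
  intros y Hy. apply Rabs_def2 in Hy. generalize (Rmin_l (1-x) (1+x)) (Rmin_r (1-x) (1+x)).
  unfold Icc11. lra.
Qed.

Lemma Icc_of_abs x : Rabs x < 1 -> Icc11 x.
Proof. intros H. apply Rabs_def2 in H. unfold Icc11. lra. Qed.

Lemma psi_part (k0 : R) (z z1 z2 : R -> C) :
  (forall x, Icc11 x -> has_deriv_within Icc11 z z1 x) ->
  (forall x, Icc11 x -> has_deriv_within Icc11 z1 z2 x) ->
  (forall x, Icc11 x -> z x <> RtoC 0) ->
  z 1 = RtoC 1 -> z (-1) = RtoC 1 ->
  z1 1 = Cmult Ci (RtoC k0) -> z1 (-1) = Copp (Cmult Ci (RtoC k0)) ->
  exists psi1 psi2 : R -> C,
      C1_with (psi_of k0 z) psi1 /\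
      (forall x, Rabs x < 1 ->
         has_deriv_within everywhere psi1 psi2 x /\
         Cplus (Copp (psi2 x)) (Cmult (U_of k0 z z2 x) (psi_of k0 z x))
           = Cmult (RtoC (k0 ^ 2)) (psi_of k0 z x)).
Proof.
  intros Hz Hz1 Hnz Hp Hm Hp1 Hm1.
  exists (psi1_def k0 z1), z2. split; [split|].
  - apply glue_hd.
    + intros x Hx. apply (hd_ext Icc11 z _ z1); auto.
      * intros; symmetry; apply psi_M; auto.
      * apply psi1_M; auto.
    + intros x Hx. apply (hd_ext Gt1 (Ep k0) _ (fun y => Cmult (Cmult Ci (RtoC k0)) (Ep k0 y))); auto.
      * intros; symmetry; apply psi_Gt; auto.
      * apply psi1_Gt; auto.
      * unfold Ep. apply hd_eix.
    + intros x Hx. apply (hd_ext Ltm1 (Em k0) _ (fun y => Cmult (Cmult Ci (RtoC (- k0))) (Em k0 y))); auto.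
      * intros; symmetry; apply psi_Lt; auto.
      * apply psi1_Lt; auto.
      * unfold Em. apply hd_eix.
  - intros x _. apply glue_cont.
    + intros y Hy. apply (cont_ext Icc11 z1); auto.
      * intros; symmetry; apply psi1_M; auto.
      * eapply hd_cont. apply Hz1; auto.
    + intros y Hy. apply (cont_ext Gt1 (fun y => Cmult (Cmult Ci (RtoC k0)) (Ep k0 y))); auto.
      * intros; symmetry; apply psi1_Gt; auto.
      * eapply hd_cont. apply hd_mult. apply hd_const. unfold Ep. apply hd_eix.
    + intros y Hy. apply (cont_ext Ltm1 (fun y => Cmult (Cmult Ci (RtoC (- k0))) (Em k0 y))); auto.
      * intros; symmetry; apply psi1_Lt; auto.
      * eapply hd_cont. apply hd_mult. apply hd_const. unfold Em. apply hd_eix.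
  - intros x Hx. split.
    + apply (hd_cover Icc11 Icc11); [apply interior_cover; auto| |];
      apply (hd_ext Icc11 z1 _ z2); auto using Icc_of_abs;
      intros; symmetry; apply psi1_M; auto.
    + unfold U_of. destruct (Rlt_dec (Rabs x) 1); [|lra].
      rewrite psi_M by (apply Icc_of_abs; auto).
      assert (z x <> RtoC 0) by (apply Hnz, Icc_of_abs; auto).
      field. auto.
Qed.

Definition gq (z : R -> C) (y : R) : C := Cmult (z (cl y)) (z (cl y)).
Definition Fp (z : R -> C) : R -> C := prim (gq z).
Definition Nn (k0 : R) (z : R -> C) (y : R) : C := Cminus (Copp Ci) (Cmult (RtoC (2 * k0)) (Fp z y)).
Definition Hh (k0 : R) (z : R -> C) (y : R) : C := Cmult (Nn k0 z y) (Cinv (Cmult (z y) (z y))).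
Definition Ht (k0 : R) (z : R -> C) (y : R) : C := Hh k0 z (cl y).
Definition Vp (k0 : R) (z : R -> C) : R -> C := prim (Ht k0 z).

Definition Pp k0 z y := Cmult (Cplus (Cmult Ci (RtoC (1 * y + -1))) (Vp k0 z 1)) (Ep k0 y).
Definition Pp' k0 z y := Cplus (Cmult Ci (Ep k0 y))
  (Cmult (Cplus (Cmult Ci (RtoC (1 * y + -1))) (Vp k0 z 1)) (Cmult (Cmult Ci (RtoC k0)) (Ep k0 y))).
Definition Pm k0 y := Cmult (Cmult Ci (RtoC (-1 * y + -1))) (Em k0 y).
Definition Pm' k0 y := Cplus (Cmult (Copp Ci) (Em k0 y))
  (Cmult (Cmult Ci (RtoC (-1 * y + -1))) (Cmult (Cmult Ci (RtoC (- k0))) (Em k0 y))).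
Definition PM k0 z y := Cmult (z y) (Vp k0 z y).
Definition PM' k0 z z1 y := Cplus (Cmult (z1 y) (Vp k0 z y)) (Cmult (Nn k0 z y) (Cinv (z y))).
Definition phi2_def k0 z z2 y := Cminus (Cmult (z2 y) (Vp k0 z y)) (Cmult (RtoC (2 * k0)) (z y)).

Definition glue3 (a b c : R -> C) (y : R) : C :=
  if Rle_dec (Rabs y) 1 then a y else if Rle_dec y 0 then c y else b y.

Lemma glue3_M a b c y : Icc11 y -> glue3 a b c y = a y.
Proof.
  intros Hy. unfold glue3. destruct (Rle_dec (Rabs y) 1); auto.
  exfalso. apply n. unfold Icc11 in Hy. apply Rabs_le. lra.
Qed.

Lemma glue3_Gt a b c y : a 1 = b 1 -> Gt1 y -> glue3 a b c y = b y.
Proof.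
  unfold Gt1. intros E Hy. unfold glue3. rewrite abs_Gt by auto.
  destruct (Rle_dec y 1).
  - replace y with 1 by lra. auto.
  - destruct (Rle_dec y 0); [lra| auto].
Qed.

Lemma glue3_Lt a b c y : a (-1) = c (-1) -> Ltm1 y -> glue3 a b c y = c y.
Proof.
  unfold Ltm1. intros E Hy. unfold glue3. rewrite abs_Lt by auto.
  destruct (Rle_dec (- y) 1).
  - replace y with (-1) by lra. auto.
  - destruct (Rle_dec y 0); [auto| lra].
Qed.

Lemma glue3_hd a b c a' b' c' :
  a 1 = b 1 -> a (-1) = c (-1) -> a' 1 = b' 1 -> a' (-1) = c' (-1) ->
  (forall x, Icc11 x -> has_deriv_within Icc11 a a' x) ->
  (forall x, Gt1 x -> has_deriv_within Gt1 b b' x) ->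
  (forall x, Ltm1 x -> has_deriv_within Ltm1 c c' x) ->
  forall x, has_deriv_within everywhere (glue3 a b c) (glue3 a' b' c') x.
Proof.
  intros E1 E2 E3 E4 HM HR HL. apply glue_hd.
  - intros x Hx. apply (hd_ext Icc11 a _ a'); auto.
    + intros; symmetry; apply glue3_M; auto.
    + apply glue3_M; auto.
  - intros x Hx. apply (hd_ext Gt1 b _ b'); auto.
    + intros; symmetry; apply glue3_Gt; auto.
    + apply glue3_Gt; auto.
  - intros x Hx. apply (hd_ext Ltm1 c _ c'); auto.
    + intros; symmetry; apply glue3_Lt; auto.
    + apply glue3_Lt; auto.
Qed.

Lemma glue3_cont a b c :
  a 1 = b 1 -> a (-1) = c (-1) ->
  (forall x, Icc11 x -> ContAt Icc11 a x) ->
  (forall x, Gt1 x -> ContAt Gt1 b x) ->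
  (forall x, Ltm1 x -> ContAt Ltm1 c x) ->
  forall x, ContAt everywhere (glue3 a b c) x.
Proof.
  intros E1 E2 HM HR HL. apply glue_cont.
  - intros x Hx. apply (cont_ext Icc11 a); auto.
    intros; symmetry; apply glue3_M; auto.
  - intros x Hx. apply (cont_ext Gt1 b); auto.
    intros; symmetry; apply glue3_Gt; auto.
  - intros x Hx. apply (cont_ext Ltm1 c); auto.
    intros; symmetry; apply glue3_Lt; auto.
Qed.


Lemma gq_cont z z1 : (forall x, Icc11 x -> has_deriv_within Icc11 z z1 x) ->
  forall x, ContAt everywhere (gq z) x.
Proof.
  intros Hz. apply (cont_clamp (fun t => Cmult (z t) (z t))).
  intros x Hx. eapply hd_cont. apply hd_mult; apply Hz; auto.
Qed.

Lemma Nn_hd k0 z z1 D x : (forall x, Icc11 x -> has_deriv_within Icc11 z z1 x) ->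
  has_deriv_within D (Nn k0 z)
    (fun y => Cminus (RtoC 0) (Cplus (Cmult (RtoC 0) (Fp z y)) (Cmult (RtoC (2 * k0)) (gq z y)))) x.
Proof.
  intros Hz. unfold Nn. apply hd_minus; [apply hd_const|].
  apply hd_mult; [apply hd_const|]. unfold Fp. apply hd_prim. eapply gq_cont; eauto.
Qed.

Lemma Ht_cont k0 z z1 : (forall x, Icc11 x -> has_deriv_within Icc11 z z1 x) ->
  (forall x, Icc11 x -> z x <> RtoC 0) ->
  forall x, ContAt everywhere (Ht k0 z) x.
Proof.
  intros Hz Hnz. unfold Ht. apply (cont_clamp (Hh k0 z)).
  intros x Hx. eapply hd_cont. unfold Hh. apply hd_mult.
  - eapply Nn_hd; eauto.
  - apply hd_inv. apply Cmult_neq_0; auto. apply hd_mult; apply Hz; auto.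
Qed.

Lemma Vp_hd k0 z z1 D x : (forall x, Icc11 x -> has_deriv_within Icc11 z z1 x) ->
  (forall x, Icc11 x -> z x <> RtoC 0) ->
  has_deriv_within D (Vp k0 z) (Ht k0 z) x.
Proof. intros. unfold Vp. apply hd_prim. eapply Ht_cont; eauto. Qed.

Lemma PM_hd k0 z z1 x : (forall x, Icc11 x -> has_deriv_within Icc11 z z1 x) ->
  (forall x, Icc11 x -> z x <> RtoC 0) -> Icc11 x ->
  has_deriv_within Icc11 (PM k0 z) (PM' k0 z z1) x.
Proof.
  intros Hz Hnz Hx. unfold PM.
  eapply hd_val; [| apply hd_mult; [apply Hz; auto| eapply Vp_hd; eauto]].
  unfold PM', Ht, Hh. rewrite cl_id by auto.
  assert (z x <> RtoC 0) by auto. field. auto.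
Qed.

Lemma PM'_hd k0 z z1 z2 x : (forall x, Icc11 x -> has_deriv_within Icc11 z z1 x) ->
  (forall x, Icc11 x -> has_deriv_within Icc11 z1 z2 x) ->
  (forall x, Icc11 x -> z x <> RtoC 0) -> Icc11 x ->
  has_deriv_within Icc11 (PM' k0 z z1) (phi2_def k0 z z2) x.
Proof.
  intros Hz Hz1 Hnz Hx. unfold PM'.
  eapply hd_val; [| apply hd_plus; [apply hd_mult; [apply Hz1; auto| eapply Vp_hd; eauto]
                                   | apply hd_mult; [eapply Nn_hd; eauto| apply hd_inv; [auto| apply Hz; auto]]]].
  unfold phi2_def, Ht, Hh, gq. rewrite !cl_id by auto.
  assert (z x <> RtoC 0) by auto. field. auto.
Qed.

Lemma Pp_hd k0 z D x : has_deriv_within D (Pp k0 z) (Pp' k0 z) x.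
Proof.
  unfold Pp.
  eapply hd_val; [| apply hd_mult; [apply hd_plus; [apply hd_mult; [apply hd_const| apply hd_lin]| apply hd_const]
                                   | unfold Ep; apply hd_eix]].
  unfold Pp', Ep. Ceq.
Qed.

Lemma Pm_hd k0 D x : has_deriv_within D (Pm k0) (Pm' k0) x.
Proof.
  unfold Pm.
  eapply hd_val; [| apply hd_mult; [apply hd_mult; [apply hd_const| apply hd_lin]
                                   | unfold Em; apply hd_eix]].
  unfold Pm', Em. Ceq.
Qed.

Lemma Pp'_cont k0 z D x : ContAt D (Pp' k0 z) x.
Proof.
  eapply hd_cont. unfold Pp'.
  apply hd_plus; [apply hd_mult; [apply hd_const| unfold Ep; apply hd_eix]|].
  apply hd_mult. apply hd_plus; [apply hd_mult; [apply hd_const| apply hd_lin]| apply hd_const].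
  apply hd_mult; [apply hd_const| unfold Ep; apply hd_eix].
Qed.

Lemma Pm'_cont k0 D x : ContAt D (Pm' k0) x.
Proof.
  eapply hd_cont. unfold Pm'.
  apply hd_plus; [apply hd_mult; [apply hd_const| unfold Em; apply hd_eix]|].
  apply hd_mult. apply hd_mult; [apply hd_const| apply hd_lin].
  apply hd_mult; [apply hd_const| unfold Em; apply hd_eix].
Qed.

Ltac Ceqf := apply injective_projections; simpl; field.

Lemma Nn_m1 k0 z : Nn k0 z (-1) = Copp Ci.
Proof. unfold Nn, Fp. rewrite prim_m1. Ceq. Qed.

Lemma Nn_1 k0 z : k0 <> 0 ->
  is_RInt (fun x => Cmult (z x) (z x)) (-1) 1 (Cinv (Cmult Ci (RtoC k0))) ->
  Nn k0 z 1 = Ci.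
Proof.
  intros Hk HI. unfold Nn, Fp, gq. rewrite (prim_1 z _ HI). Ceqf; auto.
Qed.

Lemma Vp_m1 k0 z : Vp k0 z (-1) = RtoC 0.
Proof. apply prim_m1. Qed.

Theorem mainTheorem3 (k0 : R) (z z1 z2 : R -> C) :
  k0 <> 0 ->
  (* z in C^2([-1,1]) with first derivative z1 and second derivative z2 *)
  (forall x, Icc11 x -> has_deriv_within Icc11 z z1 x) ->
  (forall x, Icc11 x -> has_deriv_within Icc11 z1 z2 x) ->
  cont_within Icc11 z2 ->
  (forall x, Icc11 x -> z x <> RtoC 0) ->
  z 1 = RtoC 1 -> z (-1) = RtoC 1 ->
  z1 1 = Cmult Ci (RtoC k0) -> z1 (-1) = Copp (Cmult Ci (RtoC k0)) ->
  is_RInt (fun x => Cmult (z x) (z x)) (-1) 1 (Cinv (Cmult Ci (RtoC k0))) ->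
  let U := U_of k0 z z2 in
  let psi := psi_of k0 z in
  let alpha := eix (- k0) in
  (* psi is a nontrivial C^1 solution with the prescribed outgoing form *)
  ((exists psi1 psi2 : R -> C,
      C1_with psi psi1 /\
      (forall x, Rabs x < 1 ->
         has_deriv_within everywhere psi1 psi2 x /\
         Cplus (Copp (psi2 x)) (Cmult (U x) (psi x))
           = Cmult (RtoC (k0 ^ 2)) (psi x))) /\
   (forall x, 1 <= x -> psi x = Cmult alpha (eix (k0 * Rabs x))) /\
   (forall x, x <= -1 -> psi x = Cmult alpha (eix (k0 * Rabs x))) /\
   (exists x, psi x <> RtoC 0)) /\
  (* second order: the inhomogeneous problem has a C^1(R) solution *)
  (exists (beta_p beta_m : C) (phi phi1 phi2 : R -> C),
      C1_with phi phi1 /\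
      (forall x, Rabs x < 1 ->
         has_deriv_within everywhere phi1 phi2 x /\
         Cminus (Cplus (Copp (phi2 x)) (Cmult (U x) (phi x)))
                (Cmult (RtoC (k0 ^ 2)) (phi x))
           = Cmult (RtoC (2 * k0)) (psi x)) /\
      (forall x, 1 <= x ->
         phi x = Cmult (Cplus (Cmult (Cmult Ci alpha) (RtoC (Rabs x))) beta_p)
                       (eix (k0 * Rabs x))) /\
      (forall x, x <= -1 ->
         phi x = Cmult (Cplus (Cmult (Cmult Ci alpha) (RtoC (Rabs x))) beta_m)
                       (eix (k0 * Rabs x)))).
Proof.
  intros Hk Hz Hz1 Hz2c Hnz Hp Hm Hp1 Hm1 HI U psi alpha.
  unfold U, psi, alpha.
  assert (B1 : PM k0 z 1 = Pp k0 z 1).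
  { unfold PM, Pp, Ep. rewrite Hp. replace (k0 * 1 + - k0) with 0 by ring. rewrite eix_0. Ceq. }
  assert (B2 : PM k0 z (-1) = Pm k0 (-1)).
  { unfold PM, Pm, Em. rewrite Hm, Vp_m1. replace (- k0 * -1 + - k0) with 0 by ring. rewrite eix_0. Ceq. }
  assert (B3 : PM' k0 z z1 1 = Pp' k0 z 1).
  { unfold PM', Pp', Ep. rewrite Hp1, Hp, (Nn_1 k0 z Hk HI). replace (k0 * 1 + - k0) with 0 by ring.
    rewrite eix_0. Ceqf. }
  assert (B4 : PM' k0 z z1 (-1) = Pm' k0 (-1)).
  { unfold PM', Pm', Em. rewrite Hm1, Hm, Nn_m1, Vp_m1. replace (- k0 * -1 + - k0) with 0 by ring.
    rewrite eix_0. Ceqf. }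
  split.
  - split; [apply (psi_part k0 z z1 z2); auto|].
    split; [|split].
    + intros x Hx. rewrite psi_Gt by auto. unfold Ep. rewrite abs_Gt by auto.
      replace (k0 * x + - k0) with (- k0 + k0 * x) by ring. apply eix_add.
    + intros x Hx. rewrite psi_Lt by auto. unfold Em. rewrite abs_Lt by auto.
      replace (- k0 * x + - k0) with (- k0 + k0 * - x) by ring. apply eix_add.
    + exists 1. rewrite psi_M by (unfold Icc11; lra). rewrite Hp. intro E. injection E. lra.
  - exists (Cmult (eix (- k0)) (Cminus (Vp k0 z 1) Ci)), (Copp (Cmult Ci (eix (- k0)))),
      (glue3 (PM k0 z) (Pp k0 z) (Pm k0)), (glue3 (PM' k0 z z1) (Pp' k0 z) (Pm' k0)),
      (phi2_def k0 z z2).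
    split; [split|split; [|split]].
    + apply glue3_hd; auto.
      * intros x Hx. apply PM_hd; auto.
      * intros x Hx. apply Pp_hd.
      * intros x Hx. apply Pm_hd.
    + intros x _. apply glue3_cont; auto.
      * intros y Hy. eapply hd_cont. apply PM'_hd; auto.
      * intros y Hy. apply Pp'_cont.
      * intros y Hy. apply Pm'_cont.
    + intros x Hx. split.
      * apply (hd_cover Icc11 Icc11); [apply interior_cover; auto| |];
        apply (hd_ext Icc11 (PM' k0 z z1) _ (phi2_def k0 z z2)); auto using Icc_of_abs;
        try (intros; symmetry; apply glue3_M; auto);
        apply PM'_hd; auto using Icc_of_abs.
      * rewrite glue3_M by (apply Icc_of_abs; auto).
        unfold U_of. destruct (Rlt_dec (Rabs x) 1); [|lra].
        rewrite psi_M by (apply Icc_of_abs; auto).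
        assert (z x <> RtoC 0) by (apply Hnz, Icc_of_abs; auto).
        unfold PM, phi2_def. field. auto.
    + intros x Hx. rewrite glue3_Gt by (auto; unfold Gt1; lra).
      unfold Pp, Ep. rewrite abs_Gt by auto.
      replace (k0 * x + - k0) with (k0 * x + - k0) by ring. rewrite eix_add. Ceq.
    + intros x Hx. rewrite glue3_Lt by (auto; unfold Ltm1; lra).
      unfold Pm, Em. rewrite abs_Lt by auto.
      replace (- k0 * x + - k0) with (k0 * - x + - k0) by ring. rewrite eix_add. Ceq.
Qed.
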